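(* Consider the deep linear network setting below, trained by gradient descent with Polyak's momentum with step size $\eta$ and momentum parameter $\beta$. Let $\xi_t:=\mathrm{vec}(U_t-Y)\in\mathbb{R}^{d_yn}$, let $M_{t,l}:=\sum_{s=0}^t\beta^{t-s}\frac{\partial\ell}{\partial W^{(l)}}(W_s)$, and define $$H_t:=\frac{1}{m^{L-1}d_y}\sum_{l=1}^L\Big[(W^{(l-1:1)}_tX)^\top(W^{(l-1:1)}_tX)\otimes W^{(L:l+1)}_t(W^{(L:l+1)}_t)^\top\Big]\in\mathbb{R}^{d_yn\times d_yn},$$ $$\Phi_t:=\prod_{l}(W^{(l)}_t-\eta M_{t,l})-W^{(L:1)}_t+\eta\sum_{l=1}^LW^{(L:l+1)}_tM_{t,l}W^{(l-1:1)}_t,\qquad\phi_t:=\tfrac{1}{\sqrt{m^{L-1}d_y}}\mathrm{vec}(\Phi_tX),$$ $$\psi_t:=\tfrac{1}{\sqrt{m^{L-1}d_y}}\mathrm{vec}\Big((L-1)\beta W^{(L:1)}_tX+\beta W^{(L:1)}_{t-1}X-\beta\sum_{l=1}^LW^{(L:l+1)}_tW^{(l)}_{t-1}W^{(l-1:1)}_tX\Big),\qquad \iota_t:=\eta(H_0-H_t)\xi_t,$$ where $\prod_l(W^{(l)}_t-\eta M_{t,l})$ denotes the ordered product $(W^{(L)}_t-\eta M_{t,L})\cdots(W^{(1)}_t-\eta M_{t,1})$. Then $H_t$ is positive semidefinite and for every $t\ge0$, $$\begin{bmatrix}\xi_{t+1}\\ \xi_t\end{bmatrix}=\begin{bmatrix}(1+\beta)I_{d_yn}-\eta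 H_0&-\beta I_{d_yn}\\ I_{d_yn}&0\end{bmatrix}\begin{bmatrix}\xi_t\\ \xi_{t-1}\end{bmatrix}+\begin{bmatrix}\phi_t+\psi_t+\iota_t\\0\end{bmatrix}.$$
   Context: Deep linear network: $\mathcal N_W(x)=\frac{1}{\sqrt{m^{L-1}d_y}}W^{(L)}W^{(L-1)}\cdots W^{(1)}x$ with $W^{(l)}\in\mathbb{R}^{d_l\times d_{l-1}}$, $d_0=d$, $d_L=d_y$, $d_l=m$ otherwise. $W^{(j:i)}:=W^{(j)}W^{(j-1)}\cdots W^{(i)}$ for $i\le j$ and $W^{(i-1:i)}:=I$ (identity of appropriate size). Data matrix $X=[x_1,\dots,x_n]\in\mathbb{R}^{d\times n}$, labels $Y\in\mathbb{R}^{d_y\times n}$, output $U:=\frac{1}{\sqrt{m^{L-1}d_y}}W^{(L:1)}X$, loss $\ell(W)=\frac12\|U-Y\|_F^2$. Gradient descent with Polyak's momentum: $W^{(l)}_{-1}:=W^{(l)}_0$, $W^{(l)}_{t+1}=W^{(l)}_t-\eta\frac{\partial\ell}{\partial W^{(l)}}(W_t)+\beta(W^{(l)}_t-W^{(l)}_{t-1})$ for every layer $l$ (equivalently $W^{(l)}_{t+1}=W^{(l)}_t-\eta M_{t,l}$). $U_t$ is the output at iterate $W_t$. $\mathrm{vec}$ is column-major vectorization, $\otimes$ the Kronecker product. *)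

(* Defs.v *)
From HB Require Import structures.
From mathcomp Require Import all_boot all_order all_algebra.
From mathcomp Require Import boolp classical_sets reals topology normedtype derive.
From mathcomp Require Import mxtens.
Set Implicit Arguments. Unset Strict Implicit. Unset Printing Implicit Defensive.
Import Order.TTheory GRing.Theory Num.Theory.
Local Open Scope ring_scope.

Definition dimf (d m dy L : nat) (l : nat) : nat :=
  if l == 0%N then d else if l == L then dy else m.

(* A family of weights: W l : d_l x d_{l-1} (only 1 <= l <= L is meaningful). *)
Definition Wts (R : realType) (d m dy L : nat) :=
  forall l : nat, 'M[R]_(dimf d m dy L l, dimf d m dy L l.-1).

Fixpoint preW (R : realType) (d m dy L : nat) (A : Wts R d m dy L) (l : nat)
  : 'M[R]_(dimf d m dy L l, d) :=
  match l with
  | 0 => 1%:M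
  | l'.+1 => A l'.+1 *m preW A l'
  end.

(* Product of layers i+1, ..., i+k : W^{(i+k : i+1)}, with the empty product = I. *)
Fixpoint midW (R : realType) (d m dy L : nat) (A : Wts R d m dy L) (i k : nat)
  : 'M[R]_(dimf d m dy L (k + i), dimf d m dy L i) :=
  match k with
  | 0 => 1%:M
  | k'.+1 => A (k' + i).+1 *m midW A i k'
  end.

(* For 0 <= l <= L (and L >= 1) the dimensions of
   midW A l (L - l) are exactly (d_y, d_l) and conform_mx is just the identity
   cast; the default 0 is only used for meaningless indices l > L. *)
Definition postW (R : realType) (d m dy L : nat) (A : Wts R d m dy L) (l : nat)
  : 'M[R]_(dy, dimf d m dy L l) :=
  conform_mx 0 (midW A l (L - l)).

Definition cnorm (R : realType) (m dy L : nat) : R :=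
  (Num.sqrt ((m ^ (L - 1) * dy)%N%:R))^-1.

Definition outU (R : realType) (d m dy n L : nat) (A : Wts R d m dy L)
  (X : 'M[R]_(d, n)) : 'M[R]_(dy, n) :=
  cnorm R m dy L *: (postW A 0 *m X).

Definition loss (R : realType) (d m dy n L : nat) (X : 'M[R]_(d, n))
  (Y : 'M[R]_(dy, n)) (A : Wts R d m dy L) : R :=
  2^-1 * \sum_(a < dy) \sum_(b < n) ((outU A X - Y) a b) ^+ 2.

Definition updW (R : realType) (d m dy L : nat) (A : Wts R d m dy L) (l : nat)
  (B : 'M[R]_(dimf d m dy L l, dimf d m dy L l.-1)) : Wts R d m dy L :=
  fun k => if l =P k is ReflectT e
           then ecast k 'M[R]_(dimf d m dy L k, dimf d m dy L k.-1) e B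
           else A k.

Definition gradW (R : realType) (d m dy n L : nat) (X : 'M[R]_(d, n))
  (Y : 'M[R]_(dy, n)) (A : Wts R d m dy L) (l : nat)
  : 'M[R]_(dimf d m dy L l, dimf d m dy L l.-1) :=
  \matrix_(i, j) @derive1 R R^o
     (fun s : R => loss X Y (updW A (\matrix_(a, b)
          if (a == i) && (b == j) then s else A l a b)))
     (A l i j).

(* Column-major vectorisation: vec A has entry A i j at index j * p + i. *)
Definition vecc (R : realType) (p q : nat) (A : 'M[R]_(p, q)) : 'cV[R]_(q * p) :=
  \col_k A (mxtens_unindex k).2 (mxtens_unindex k).1.

(* Kronecker product (library tensmx, compatible with vecc's index convention). *)
Definition kron (R : realType) (p q r s : nat) (A : 'M[R]_(p, q)) (B : 'M[R]_(r, s))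
  : 'M[R]_(p * r, q * s) := tensmx A B.

Definition psd (R : realType) (N : nat) (H : 'M[R]_N) : Prop :=
  H^T = H /\ forall v : 'cV[R]_N, 0 <= (v^T *m H *m v) 0 0.

(* Main.v *)
Require Import Defs.
From HB Require Import structures.
From mathcomp Require Import all_boot all_order all_algebra.
From mathcomp Require Import boolp classical_sets reals topology normedtype derive.
From mathcomp Require Import mxtens.
From mathcomp Require Import zify ring lra.
Set Implicit Arguments. Unset Strict Implicit. Unset Printing Implicit Defensive.
Import Order.TTheory GRing.Theory Num.Theory.
Local Open Scope ring_scope.

Section Struct.
Variables (R : realType) (d m dy L : nat).
Implicit Types A : Wts R d m dy L.

Lemma preW_ext A A' k : (forall j, (0 < j <= k)%N -> A j = A' j) ->
  preW A k = preW A' k.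
Proof.
elim: k => [//|k IH] H /=.
rewrite H ?ltnSn // IH // => j /andP[j0 jk]; apply: H; rewrite j0 /=; exact: ltnW.
Qed.

Lemma midW_ext A A' i k : (forall j, (i < j <= k + i)%N -> A j = A' j) ->
  midW A i k = midW A' i k.
Proof.
elim: k => [//|k IH] H /=.
rewrite H; last by rewrite ltnS leq_addl /=.
rewrite IH // => j /andP[j0 jk]; apply: H; rewrite j0 /= addSn; exact: ltnW.
Qed.

Lemma midW_preW A i k : midW A i k *m preW A i = preW A (k + i).
Proof. elim: k => [|k IH] /=; first by rewrite mul1mx. by rewrite -mulmxA IH. Qed.

Lemma conform_mulmx p p' q r (B : 'M[R]_(p',q)) (X : 'M[R]_(p,q)) (Y : 'M[R]_(q,r)) :
  conform_mx B X *m Y = conform_mx (B *m Y) (X *m Y).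
Proof.
case: (eqVneq p p') => [e|ne].
  by subst; rewrite !conform_mx_id.
by rewrite !nonconform_mx // ne.
Qed.

Definition Fin A : 'M[R]_(dy, d) := conform_mx 0 (preW A L).

Lemma postW_preW A l : (l <= L)%N -> postW A l *m preW A l = Fin A.
Proof. by move=> hl; rewrite /postW conform_mulmx mul0mx midW_preW subnK. Qed.

Lemma postW0 A : postW A 0 = Fin A.
Proof. by rewrite -(postW_preW A (leq0n L)) /= mulmx1. Qed.

Lemma split_post A l : (1 <= l <= L)%N ->
  postW A l *m A l *m preW A l.-1 = Fin A.
Proof.
case: l => // l /andP[_ hl]; rewrite -mulmxA.
exact: (postW_preW A hl).
Qed.

Lemma postW_ext A A' l : (forall j, (l < j <= L)%N -> A j = A' j) ->
  postW A l = postW A' l.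
Proof.
move=> H; rewrite /postW (@midW_ext A A') // => j /andP[j1 j2]; apply: H.
lia.
Qed.

Lemma Fin_ext A A' : (forall j, (0 < j <= L)%N -> A j = A' j) -> Fin A = Fin A'.
Proof. move=> H; rewrite -(postW0 A) -(postW0 A'); exact: (@postW_ext A A' 0 H). Qed.

Lemma updW_same A (l : nat) (B : 'M[R]_(dimf d m dy L l, dimf d m dy L l.-1)) : updW A B l = B.
Proof.
rewrite /updW; case: eqP => // e.
by rewrite (eq_irrelevance e erefl).
Qed.

Lemma updW_other A (l : nat) (B : 'M[R]_(dimf d m dy L l, dimf d m dy L l.-1)) k : l != k -> updW A B k = A k.
Proof. by rewrite /updW; case: eqP. Qed.

Lemma Fin_upd A (l : nat) (B : 'M[R]_(dimf d m dy L l, dimf d m dy L l.-1)) : (1 <= l <= L)%N ->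
  Fin (updW A B) = postW A l *m B *m preW A l.-1.
Proof.
move=> hl; rewrite -(split_post (updW A B) hl) updW_same.
rewrite (@postW_ext (updW A B) A) ?(@preW_ext (updW A B) A) //.
  by move=> j /andP[_ jl]; rewrite updW_other //; lia.
by move=> j /andP[jl _]; rewrite updW_other //; lia.
Qed.
End Struct.

Lemma delta_prod (R : comRingType) p q r s (P : 'M[R]_(p, q)) (Q : 'M[R]_(r, s)) i j a b :
  (P *m delta_mx i j *m Q) a b = P a i * Q j b.
Proof.
rewrite -(mul_delta_mx (0 : 'I_1)) mulmxA -colE -mulmxA -rowE.
by rewrite mxE big_ord1 !mxE.
Qed.

Section Grad.
Variables (R : realType) (d m dy n L : nat) (X : 'M[R]_(d, n)) (Y : 'M[R]_(dy, n)).
Implicit Types A : Wts R d m dy L.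

Lemma gradW_eq A l : (1 <= l <= L)%N ->
  gradW X Y A l = cnorm R m dy L *:
    ((postW A l)^T *m (outU A X - Y) *m (preW A l.-1 *m X)^T).
Proof.
move=> hl; apply/matrixP => i j; rewrite mxE [RHS]mxE.
set P := postW A l; set Q := preW A l.-1 *m X; set c := cnorm R m dy L.
set E := outU A X - Y; set a0 := A l i j.
set K := c *: (P *m delta_mx i j *m Q).
have HK : forall s, outU (updW A (\matrix_(a, b) if (a == i) && (b == j) then s else A l a b)) X - Y
   = E + (s - a0) *: K.
  move=> s; rewrite /E /outU !postW0 Fin_upd // -(split_post A hl).
  have -> : (\matrix_(a, b) if (a == i) && (b == j) then s else A l a b)
      = A l + (s - a0) *: delta_mx i j.
    apply/matrixP => a b; rewrite !mxE.
    by case/boolP: ((a == i) && (b == j)) => [/andP[/eqP-> /eqP->]|_] /=; rewrite /a0; ring.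
  rewrite /K /Q mulmxDr mulmxDl !mulmxDl -!mulmxA scalerDr.
  rewrite -scalemxAl -scalemxAr scalerA mulrC -scalerA.
  by rewrite addrAC.
have HKab : forall a b, K a b = c * (P a i * Q j b).
  by move=> a b; rewrite /K mxE delta_prod.
clearbody E K.
pose p := \sum_(a < dy) \sum_(b < n)
   (2^-1)%:P * ((E a b - a0 * K a b)%:P + (K a b)%:P * 'X) ^+ 2.
have Hf : (fun s => loss X Y (updW A (\matrix_(a, b) if (a == i) && (b == j) then s else A l a b)))
   = horner p.
  apply/funext => s'; rewrite /loss HK /p horner_sum mulr_sumr; apply: eq_bigr => a _.
  rewrite horner_sum mulr_sumr; apply: eq_bigr => b _.
  rewrite !mxE expr2 mulrA !(hornerM, hornerD, hornerC, hornerX, hornerN, horner_exp); ring.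
rewrite Hf -derivE /p.
rewrite linear_sum horner_sum /=.
have Ht : forall a b, ((2^-1)%:P * ((E a b - a0 * K a b)%:P + (K a b)%:P * 'X) ^+ 2)^`().[a0]
   = E a b * K a b.
  move=> a b; rewrite expr2 !derivM !derivD !derivM !derivC !derivX.
  rewrite !(hornerM, hornerD, hornerC, hornerX, hornerN, horner0) /=.
  rewrite !mul0r !add0r !mulr1.
  have -> : K a b * (E a b - a0 * K a b + K a b * a0) +
   (E a b - a0 * K a b + K a b * a0) * K a b = 2 * (E a b * K a b) by ring.
  by rewrite !mulrA mulVf ?mul1r // pnatr_eq0.
under eq_bigr => a _ do rewrite linear_sum horner_sum.
under eq_bigr => a _ do under eq_bigr => b _ do rewrite Ht HKab.
rewrite mxE mulr_sumr exchange_big /=; apply: eq_bigr => b _.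
rewrite !mxE mulr_suml mulr_sumr; apply: eq_bigr => a _.
rewrite !mxE; ring.
Qed.
End Grad.

Section Vec.
Variable R : realType.

Lemma vecc_add p q (A B : 'M[R]_(p, q)) : vecc (A + B) = vecc A + vecc B.
Proof. by apply/matrixP => k z; rewrite !mxE. Qed.
Lemma vecc_scale p q a (A : 'M[R]_(p, q)) : vecc (a *: A) = a *: vecc A.
Proof. by apply/matrixP => k z; rewrite !mxE. Qed.
Lemma vecc_opp p q (A : 'M[R]_(p, q)) : vecc (- A) = - vecc A.
Proof. by apply/matrixP => k z; rewrite !mxE. Qed.
Lemma vecc_sub p q (A B : 'M[R]_(p, q)) : vecc (A - B) = vecc A - vecc B.
Proof. by rewrite vecc_add vecc_opp. Qed.
Lemma vecc_sum p q (I : eqType) (r : seq I) (P : pred I) (F : I -> 'M[R]_(p, q)) :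
  vecc (\sum_(i <- r | P i) F i) = \sum_(i <- r | P i) vecc (F i).
Proof.
apply: (big_morph (@vecc R p q) (@vecc_add p q)).
by apply/matrixP => k z; rewrite !mxE.
Qed.

Lemma vecc_mul3 p r s q (A : 'M[R]_(p, r)) (B : 'M[R]_(r, s)) (C : 'M[R]_(s, q)) :
  vecc (A *m B *m C) = kron C^T A *m vecc B.
Proof.
apply/matrixP => k z; case: (mxtens_indexP k) => j i.
rewrite /kron !mxE mxtens_indexK /=.
transitivity (\sum_(y < s) \sum_(x < r) C^T j y * A i x * B x y).
  apply: eq_bigr => y _; rewrite !mxE mulr_suml; apply: eq_bigr => x _.
  by ring.
rewrite pair_big; symmetry; rewrite (reindex (@mxtens_index s r)) /=; last first.
  by exists (@mxtens_unindex s r)=> kk; rewrite (mxtens_indexK, mxtens_unindexK).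
apply: eq_bigr => [[y x]] _; rewrite tensmxE !mxE mxtens_indexK /=.
by [].
Qed.

End Vec.

Section Psd.
Variable R : realType.

Lemma psd_gram k N (G : 'M[R]_(k, N)) : psd (G^T *m G).
Proof.
split; first by rewrite trmx_mul trmxK.
move=> v; rewrite mulmxA -trmx_mul -mulmxA mxE.
apply: sumr_ge0 => i _; rewrite mxE -expr2; exact: sqr_ge0.
Qed.

Lemma psd_add N (A B : 'M[R]_N) : psd A -> psd B -> psd (A + B).
Proof.
move=> [hA pA] [hB pB]; split; first by rewrite linearD /= hA hB.
by move=> v; rewrite mulmxDr mulmxDl mxE addr_ge0.
Qed.

Lemma psd0 N : psd (0 : 'M[R]_N).
Proof. by split; [rewrite trmx0 | move=> v; rewrite mulmx0 mul0mx mxE]. Qed.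

Lemma psd_scale N a (A : 'M[R]_N) : 0 <= a -> psd A -> psd (a *: A).
Proof.
move=> ha [hA pA]; split; first by rewrite linearZ /= hA.
by move=> v; rewrite -scalemxAr -scalemxAl mxE mulr_ge0.
Qed.

Lemma psd_kron n dy k k' (Q : 'M[R]_(k, n)) (P : 'M[R]_(dy, k')) :
  psd (kron (Q^T *m Q) (P *m P^T)).
Proof.
have -> : kron (Q^T *m Q) (P *m P^T) = (kron Q P^T)^T *m kron Q P^T.
  by rewrite /kron trmx_tens trmxK tensmx_mul.
exact: psd_gram.
Qed.
End Psd.

Lemma alg_core (R : realType) p q (c eta beta Lr : R) (Y F1 F0 Fm Sg SW : 'M[R]_(p,q))
  (H0 Ht : 'M[R]_(q * p)) :
  Ht *m vecc (c *: F0 - Y) = c *: vecc Sg ->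
  vecc (c *: F1 - Y) =
   ((1 + beta)%:M - eta *: H0) *m vecc (c *: F0 - Y) + (- beta%:M) *m vecc (c *: Fm - Y)
   + (c *: vecc (F1 - F0 + (eta *: Sg + beta *: SW - (beta * Lr) *: F0))
      + c *: vecc ((Lr - 1) * beta *: F0 + beta *: Fm - beta *: SW)
      + eta *: ((H0 - Ht) *m vecc (c *: F0 - Y))).
Proof.
move=> hH; rewrite !mulmxBl hH mulNmx !mul_scalar_mx -scalemxAl.
move: (H0 *m _) => h0.
apply/matrixP => k z; rewrite !mxE; ring.
Qed.

Lemma kron_gram_vec (R : realType) (k p q : nat) (Z : 'M[R]_(k, q)) (A : 'M[R]_(p,p))
  (B : 'M[R]_(p, q)) : kron (Z^T *m Z) A *m vecc B = vecc (A *m B *m (Z^T *m Z)).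
Proof. by rewrite vecc_mul3 trmx_mul trmxK. Qed.

Theorem lemma4 (R : realType) (d m dy n L : nat) (hL : (0 < L)%N)
  (X : 'M[R]_(d, n)) (Y : 'M[R]_(dy, n)) (eta beta : R)
  (W : nat -> Wts R d m dy L)
  (hW : forall (t l : nat), (1 <= l <= L)%N ->
     W t.+1 l = W t l - eta *: gradW X Y (W t) l + beta *: (W t l - W t.-1 l)) :
  let M (t l : nat) := \sum_(s < t.+1) beta ^+ (t - s) *: gradW X Y (W s) l in
  let c := cnorm R m dy L in
  let xi (t : nat) := vecc (outU (W t) X - Y) in
  let H (t : nat) : 'M[R]_(n * dy) :=
    ((m ^ (L - 1) * dy)%N%:R)^-1 *:
      \sum_(1 <= l < L.+1)
        kron ((preW (W t) l.-1 *m X)^T *m (preW (W t) l.-1 *m X))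
             (postW (W t) l *m (postW (W t) l)^T) in
  let Phi (t : nat) : 'M[R]_(dy, d) :=
    postW ((fun l => W t l - eta *: M t l) : Wts R d m dy L) 0
    - postW (W t) 0
    + eta *: \sum_(1 <= l < L.+1) (postW (W t) l *m M t l *m preW (W t) l.-1) in
  let phi (t : nat) := c *: vecc (Phi t *m X) in
  let psi (t : nat) :=
    c *: vecc ((L - 1)%N%:R * beta *: (postW (W t) 0 *m X)
               + beta *: (postW (W t.-1) 0 *m X)
               - beta *: \sum_(1 <= l < L.+1)
                    (postW (W t) l *m W t.-1 l *m preW (W t) l.-1 *m X)) in
  let iota (t : nat) := eta *: ((H 0%N - H t) *m xi t) in
  (forall t : nat, psd (H t)) /\
  (forall t : nat,
     col_mx (xi t.+1) (xi t) =
       block_mx ((1 + beta)%:M - eta *: H 0%N) (- beta%:M) 1%:M 0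
         *m col_mx (xi t) (xi t.-1)
       + col_mx (phi t + psi t + iota t) 0).
Proof.
move=> M c xi H Phi phi psi iota.
split.
  move=> t; rewrite /H; apply: psd_scale; first by rewrite invr_ge0 ler0n.
  apply: (big_ind (@psd R _)); [exact: psd0 | exact: psd_add | move=> l _; exact: psd_kron].
have hMS : forall t l, M t.+1 l = gradW X Y (W t.+1) l + beta *: M t l.
  move=> t l; rewrite /M big_ord_recr /= subnn expr0 scale1r addrC; congr (_ + _).
  rewrite scaler_sumr; apply: eq_bigr => s _.
  by rewrite scalerA -exprS subSn // -ltnS.
have hWM : forall t l, (1 <= l <= L)%N -> W t.+1 l = W t l - eta *: M t l.
  move=> t l hl; elim: t => [|t IH].
    by rewrite hW // subrr scaler0 addr0 /M big_ord1 expr0 scale1r.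
  have IH' : W t.+1 l - W t l = - (eta *: M t l) by rewrite IH addrAC subrr add0r.
  rewrite hW // /= IH' hMS.
  by apply/matrixP => a b; rewrite !mxE; ring.
have hMrel : forall t l, (1 <= l <= L)%N ->
    eta *: M t l = eta *: gradW X Y (W t) l + beta *: (W t.-1 l - W t l).
  move=> t l hl; case: t => [|t].
    by rewrite /M big_ord1 expr0 scale1r subrr scaler0 addr0.
  rewrite hMS /= hWM //.
  by apply/matrixP => a b; rewrite !mxE; ring.
move=> t.
rewrite mul_block_col add_col_mx mul1mx mul0mx !addr0.
congr col_mx.
have hxi : forall s, xi s = vecc (c *: (Fin (W s) *m X) - Y).
  by move=> s; rewrite /xi /outU postW0.
pose Sg := \sum_(1 <= l < L.+1) postW (W t) l *m gradW X Y (W t) l *m preW (W t) l.-1.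
pose SW := \sum_(1 <= l < L.+1) postW (W t) l *m W t.-1 l *m preW (W t) l.-1.
have hSW0 : \sum_(1 <= l < L.+1) postW (W t) l *m W t l *m preW (W t) l.-1
    = L%:R *: Fin (W t).
  rewrite (@eq_big_nat _ _ _ 1 L.+1 _ (fun=> Fin (W t))); last first.
    by move=> l hl; apply: split_post.
  by rewrite sumr_const_nat subn1 /= scaler_nat.
have hS : eta *: \sum_(1 <= l < L.+1) postW (W t) l *m M t l *m preW (W t) l.-1
    = eta *: Sg + beta *: SW - (beta * L%:R) *: Fin (W t).
  rewrite -scalerA -hSW0 /Sg /SW !scaler_sumr -big_split -sumrB /=.
  apply: eq_big_nat => l hl.
  rewrite [in LHS]scalemxAl [in LHS]scalemxAr hMrel //.
  rewrite scalerBr mulmxDr mulmxBr mulmxDl mulmxBl -!scalemxAr -!scalemxAl.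
  by rewrite addrA.
have hF1 : Fin ((fun l => W t l - eta *: M t l) : Wts R d m dy L) = Fin (W t.+1).
  by apply: Fin_ext => j hj; rewrite hWM.
have hphi : phi t = c *: vecc (Fin (W t.+1) *m X - Fin (W t) *m X +
   (eta *: (Sg *m X) + beta *: (SW *m X) - (beta * L%:R) *: (Fin (W t) *m X))).
  rewrite /phi /Phi !postW0 hF1 hS.
  by rewrite !mulmxDl !mulNmx -!scalemxAl.
have hpsi : psi t = c *: vecc ((L%:R - 1) * beta *: (Fin (W t) *m X)
   + beta *: (Fin (W t.-1) *m X) - beta *: (SW *m X)).
  by rewrite /psi !postW0 natrB // /SW mulmx_suml.
have hc : c * c = ((m ^ (L - 1) * dy)%N%:R)^-1.
  by rewrite /c /cnorm -invfM -expr2 sqr_sqrtr ?ler0n.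
have hHt : H t *m xi t = c *: vecc (Sg *m X).
  rewrite /H /xi -scalemxAl mulmx_suml /Sg mulmx_suml vecc_sum -hc -scalerA.
  congr (_ *: _); rewrite scaler_sumr; apply: eq_big_nat => l hl.
  rewrite gradW_eq // -scalemxAr -!scalemxAl vecc_scale; congr (_ *: _).
  rewrite kron_gram_vec; congr vecc.
  by rewrite !mulmxA.
rewrite hphi hpsi /iota !hxi.
rewrite hxi in hHt.
exact: alg_core.
Qed.
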